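(* Let $\lambda,\mu,\alpha>0$. For $x\in\mathbb{Z}^+$ let $\xi_x(t)$, $t\ge0$, denote the Poisson process with uniform catastrophes with parameters $\lambda,\mu,\alpha$ started from $\xi_x(0)=x$ (defined in the context). Then for any integers $0\le x<y$, any $z\in\mathbb{R}$ and any $t\ge0$, $$\mathbf{P}(\xi_y(t)>z)\le\mathbf{P}(\xi_x(t)>z-|x-y|).$$
   Context: Let $\eta$ be a Markov chain on $\mathbb{Z}^+=\{0,1,2,\dots\}$ with transition probabilities $\mathbf{P}(\eta(n+1)=j\mid\eta(n)=i)=\frac{\lambda}{\lambda+\mu}$ if $j=i+1$ (and $i\ge1$), $=\frac{\mu}{i(\lambda+\mu)}$ if $0\le j<i$, $i\neq0$, and $=1$ if $i=0$, $j=1$. Let $\nu(t)$ be a Poisson process of rate $\alpha$ independent of $\eta$. The process $\xi_x(t):=\eta(\nu(t))$ where $\eta(0)=x$ is the Poisson process with uniform catastrophes started at $x$. *)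

(* Defs.v *)
From Stdlib Require Import Reals Arith.
From Coquelicot Require Import Coquelicot.
Open Scope R_scope.

Definition trans (lam mu : R) (i j : nat) : R :=
  match i with
  | O => if Nat.eqb j 1 then 1 else 0
  | S _ =>
      if Nat.eqb j (S i) then lam / (lam + mu)
      else if Nat.ltb j i then mu / (INR i * (lam + mu))
      else 0
  end.

(* n-step distribution of eta started at x: dist n x j = P(eta(n) = j | eta(0) = x).
   From x in n steps eta stays <= x + n, so the sum over k is finite. *)
Fixpoint dist (lam mu : R) (n x : nat) : nat -> R :=
  match n with
  | O => fun j => if Nat.eqb j x then 1 else 0
  | S m => fun j => sum_f_R0 (fun k => dist lam mu m x k * trans lam mu k j) (x + m)
  end.

Definition chain_tail (lam mu : R) (n x : nat) (z : R) : R :=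
  sum_f_R0 (fun j => if Rlt_dec z (INR j) then dist lam mu n x j else 0) (x + n).

(* P(xi_x(t) > z) where xi_x(t) = eta(nu(t)), nu a rate-alpha Poisson process
   independent of eta: conditioning on nu(t) = n (Poisson(alpha t) law). *)
Definition xi_tail (lam mu alpha : R) (x : nat) (t z : R) : R :=
  Series (fun n => exp (- (alpha * t)) * (alpha * t) ^ n / INR (fact n)
                   * chain_tail lam mu n x z).

(* Main.v *)
Require Import Defs.
From Stdlib Require Import Reals Arith.
From Coquelicot Require Import Coquelicot.
From Stdlib Require Import Lia Lra.
Open Scope R_scope.

Fixpoint sumr (n : nat) (f : nat -> R) : R :=
  match n with O => 0 | S m => sumr m f + f m end.

Lemma sumr_ext n f g : (forall i, (i < n)%nat -> f i = g i) -> sumr n f = sumr n g.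
Proof. induction n; intros H; simpl; auto. rewrite IHn, H; auto; intros; apply H; lia. Qed.

Lemma sumr_le n f g : (forall i, (i < n)%nat -> f i <= g i) -> sumr n f <= sumr n g.
Proof. induction n; intros H; simpl; [lra|]. apply Rplus_le_compat; [apply IHn; intros; apply H; lia| apply H; lia]. Qed.

Lemma sumr_plus n f g : sumr n (fun i => f i + g i) = sumr n f + sumr n g.
Proof. induction n; simpl; [ring|rewrite IHn; ring]. Qed.

Lemma sumr_scal n c f : sumr n (fun i => c * f i) = c * sumr n f.
Proof. induction n; simpl; [ring|rewrite IHn; ring]. Qed.

Lemma sumr_scal_r n c f : sumr n (fun i => f i * c) = sumr n f * c.
Proof. induction n; simpl; [ring|rewrite IHn; ring]. Qed.

Lemma sumr_const n c : sumr n (fun _ => c) = INR n * c.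
Proof. induction n; simpl sumr; [simpl; ring|rewrite IHn, S_INR; ring]. Qed.

Lemma sumr_swap n m (f : nat -> nat -> R) :
  sumr n (fun i => sumr m (fun j => f i j)) = sumr m (fun j => sumr n (fun i => f i j)).
Proof.
  induction n; simpl.
  - rewrite sumr_const; ring.
  - rewrite IHn, <- sumr_plus; reflexivity.
Qed.

Lemma sumr_add m n f : sumr (m + n) f = sumr m f + sumr n (fun i => f (m + i)%nat).
Proof.
  induction n; simpl. - rewrite Nat.add_0_r; ring.
  - rewrite Nat.add_succ_r; simpl; rewrite IHn; ring.
Qed.

Lemma sumr_f_R0 f N : sum_f_R0 f N = sumr (S N) f.
Proof. induction N; simpl in *; [ring|rewrite IHN; ring]. Qed.

Lemma sumr_zero_tail k N f : (k <= N)%nat -> (forall i, (k <= i < N)%nat -> f i = 0) ->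
  sumr N f = sumr k f.
Proof.
  induction N; intros Hk H.
  - assert (k = 0%nat) by lia; subst; reflexivity.
  - destruct (Nat.eq_dec k (S N)) as [->|Hne]; [reflexivity|].
    simpl. rewrite IHN, H; try lia; [ring| intros; apply H; lia].
Qed.

Lemma sumr_block k i G : (1 <= i)%nat ->
  sumr (k * i) (fun r => G (r / i)%nat) = INR i * sumr k G.
Proof.
  intros Hi. induction k.
  - simpl; ring.
  - replace (S k * i)%nat with (k * i + i)%nat by lia.
    rewrite sumr_add, IHk.
    rewrite (sumr_ext i _ (fun _ => G k)).
    + rewrite sumr_const; simpl; ring.
    + intros t Ht. rewrite Nat.div_add_l by lia. rewrite Nat.div_small by lia.
      rewrite Nat.add_0_r; reflexivity.
Qed.

Lemma div_couple r i k d : (1 <= i)%nat -> (1 <= k)%nat -> (k <= i + d)%nat ->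
  (r < k * i)%nat -> (r / i <= r / k + d)%nat.
Proof.
  intros Hi Hk Hki Hr.
  set (u := (r / i)%nat). set (v := (r / k)%nat).
  assert (H1 : (i * u <= r)%nat) by (apply Nat.Div0.mul_div_le).
  assert (H2 : (r < k * S v)%nat) by (apply Nat.mul_succ_div_gt; lia).
  assert (H3 : (v < i)%nat) by (apply Nat.Div0.div_lt_upper_bound; lia).
  destruct (le_lt_dec u (v + d)) as [|Hc]; auto.
  exfalso.
  assert (i * (v + d + 1) <= r)%nat.
  { apply Nat.le_trans with (i * u)%nat; auto. apply Nat.mul_le_mono_l; lia. }
  assert (k * S v <= (i + d) * S v)%nat by (apply Nat.mul_le_mono_r; lia).
  nia.
Qed.

Lemma avg_couple (E F : nat -> R) k i d : (1 <= i)%nat -> (1 <= k)%nat -> (k <= i + d)%nat ->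
  (forall j l, (j <= l + d)%nat -> E j <= F l) ->
  sumr k E / INR k <= sumr i F / INR i.
Proof.
  intros Hi Hk Hki H.
  assert (0 < INR i) by (apply lt_0_INR; lia).
  assert (0 < INR k) by (apply lt_0_INR; lia).
  assert (INR i * sumr k E <= INR k * sumr i F).
  { rewrite <- (sumr_block k i E), <- (sumr_block i k F) by lia.
    rewrite Nat.mul_comm. apply sumr_le. intros r Hr. apply H.
    rewrite Nat.mul_comm in Hr. apply div_couple; lia. }
  unfold Rdiv. apply (Rmult_le_reg_l (INR k * INR i)); [nra|].
  replace (INR k * INR i * (sumr k E * / INR k)) with (INR i * sumr k E) by (field; lra).
  replace (INR k * INR i * (sumr i F * / INR i)) with (INR k * sumr i F) by (field; lra).
  auto.
Qed.

Lemma avg_le_c (E : nat -> R) k c : (1 <= k)%nat -> (forall j, (j < k)%nat -> E j <= c) ->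
  sumr k E / INR k <= c.
Proof.
  intros Hk H. assert (0 < INR k) by (apply lt_0_INR; lia).
  apply (Rmult_le_reg_l (INR k)); auto.
  replace (INR k * (sumr k E / INR k)) with (sumr k E) by (field; lra).
  rewrite <- sumr_const. apply sumr_le; auto.
Qed.

Lemma avg_ge_c (E : nat -> R) k c : (1 <= k)%nat -> (forall j, (j < k)%nat -> c <= E j) ->
  c <= sumr k E / INR k.
Proof.
  intros Hk H. assert (0 < INR k) by (apply lt_0_INR; lia).
  apply (Rmult_le_reg_l (INR k)); auto.
  replace (INR k * (sumr k E / INR k)) with (sumr k E) by (field; lra).
  rewrite <- sumr_const. apply sumr_le; auto.
Qed.

Lemma sumr_SS n f : sumr (S (S n)) f = sumr n f + f n + f (S n).
Proof. reflexivity. Qed.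

Definition Ep lam mu (E : nat -> R) k := sumr (S (S k)) (fun j => trans lam mu k j * E j).

Lemma Ep_0 lam mu E : Ep lam mu E 0 = E 1%nat.
Proof. unfold Ep, trans; simpl; ring. Qed.

Lemma Ep_S lam mu E k : 0 < lam -> 0 < mu -> (1 <= k)%nat ->
  Ep lam mu E k = lam / (lam + mu) * E (S k) + mu / (lam + mu) * (sumr k E / INR k).
Proof.
  intros Hl Hm Hk. destruct k as [|k']; [lia|].
  assert (0 < INR (S k')) by (apply lt_0_INR; lia).
  unfold Ep. rewrite (sumr_SS (S k')).
  rewrite (sumr_ext (S k') _ (fun j => mu / (INR (S k') * (lam + mu)) * E j)).
  2:{ intros j Hj. unfold trans.
      destruct (Nat.eqb_spec j (S (S k'))); [lia|].
      destruct (Nat.ltb_spec j (S k')); [reflexivity|lia]. }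
  rewrite sumr_scal.
  unfold trans. rewrite Nat.eqb_refl.
  destruct (Nat.eqb_spec (S k') (S (S k'))); [lia|].
  destruct (Nat.ltb_spec (S k') (S k')); [lia|].
  field. lra.
Qed.

Lemma trans_nonneg lam mu i j : 0 < lam -> 0 < mu -> 0 <= trans lam mu i j.
Proof.
  intros Hl Hm. unfold trans. destruct i as [|i'].
  - destruct (Nat.eqb j 1); lra.
  - destruct (Nat.eqb j (S (S i'))).
    + unfold Rdiv; apply Rmult_le_pos; [lra|]; left; apply Rinv_0_lt_compat; lra.
    + destruct (Nat.ltb j (S i')); [|lra].
      assert (0 < INR (S i')) by (apply lt_0_INR; lia).
      unfold Rdiv; apply Rmult_le_pos; [lra|]; left; apply Rinv_0_lt_compat; nra.
Qed.

Lemma trans_zero lam mu k j : (S k < j)%nat -> trans lam mu k j = 0.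
Proof.
  intros H. unfold trans. destruct k as [|k'].
  - destruct (Nat.eqb_spec j 1); [lia|reflexivity].
  - destruct (Nat.eqb_spec j (S (S k'))); [lia|].
    destruct (Nat.ltb_spec j (S k')); [lia|reflexivity].
Qed.

Lemma dist_nonneg lam mu n x j : 0 < lam -> 0 < mu -> 0 <= Defs.dist lam mu n x j.
Proof.
  intros Hl Hm. revert j. induction n; intros j; simpl.
  - destruct (Nat.eqb j x); lra.
  - rewrite sumr_f_R0. apply Rle_trans with (sumr (S (x + n)) (fun _ => 0));
      [rewrite sumr_const; lra|].
    apply sumr_le. intros. apply Rmult_le_pos; auto. apply trans_nonneg; auto.
Qed.

Definition Ex lam mu n b (E : nat -> R) := sumr (S (b + n)) (fun j => Defs.dist lam mu n b j * E j).

Lemma Ex_ext lam mu n b E G : (forall k, E k = G k) -> Ex lam mu n b E = Ex lam mu n b G.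
Proof. intros H; unfold Ex; apply sumr_ext; intros; rewrite H; auto. Qed.

Lemma Ex_mono lam mu n b E G : 0 < lam -> 0 < mu -> (forall k, E k <= G k) ->
  Ex lam mu n b E <= Ex lam mu n b G.
Proof.
  intros Hl Hm H; unfold Ex; apply sumr_le; intros.
  apply Rmult_le_compat_l; auto. apply dist_nonneg; auto.
Qed.

Lemma Ex_step lam mu n b E : Ex lam mu (S n) b E = Ex lam mu n b (Ep lam mu E).
Proof.
  unfold Ex.
  transitivity (sumr (S (b + S n)) (fun j => sumr (S (b + n))
                   (fun k => Defs.dist lam mu n b k * trans lam mu k j * E j))).
  { apply sumr_ext; intros j _. cbn [Defs.dist]. rewrite sumr_f_R0, <- sumr_scal_r.
    reflexivity. }
  rewrite sumr_swap. apply sumr_ext; intros k Hk.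
  unfold Ep. rewrite <- sumr_scal.
  rewrite (sumr_ext _ (fun j => Defs.dist lam mu n b k * trans lam mu k j * E j)
             (fun j => Defs.dist lam mu n b k * (trans lam mu k j * E j))) by (intros; ring).
  apply sumr_zero_tail; [lia|].
  intros i Hi. rewrite trans_zero by lia. ring.
Qed.

Lemma Ex_0 lam mu b E : Ex lam mu 0 b E = E b.
Proof.
  unfold Ex. cbn [Defs.dist].
  rewrite (sumr_zero_tail (S b)); [|lia|].
  2:{ intros i Hi. destruct (Nat.eqb_spec i b); [lia|ring]. }
  simpl. rewrite Nat.eqb_refl.
  rewrite (sumr_ext b _ (fun _ => 0)).
  - rewrite sumr_const; ring.
  - intros i Hi. destruct (Nat.eqb_spec i b); [lia|ring].
Qed.

Lemma Ep_one lam mu k : 0 < lam -> 0 < mu -> Ep lam mu (fun _ => 1) k = 1.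
Proof.
  intros Hl Hm. destruct k as [|k']. - apply Ep_0.
  - rewrite Ep_S by (auto; lia). rewrite sumr_const.
    assert (0 < INR (S k')) by (apply lt_0_INR; lia). field; split; lra.
Qed.

Lemma Ex_one lam mu n b : 0 < lam -> 0 < mu -> Ex lam mu n b (fun _ => 1) = 1.
Proof.
  intros Hl Hm. induction n.
  - apply Ex_0.
  - rewrite Ex_step. transitivity (Ex lam mu n b (fun _ => 1)); [|exact IHn].
    apply Ex_ext. intros; apply Ep_one; auto.
Qed.

Lemma lin_comb p q a b c e : 0 < p -> 0 < q -> a <= c -> b <= e -> p * a + q * b <= p * c + q * e.
Proof. intros. apply Rplus_le_compat; apply Rmult_le_compat_l; lra. Qed.

Lemma onestep lam mu d (E F : nat -> R) k i : 0 < lam -> 0 < mu -> (1 <= d)%nat ->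
  (forall j l, (j <= l + d)%nat -> E j <= F l) -> (k <= i + d)%nat ->
  Ep lam mu E k <= Ep lam mu F i.
Proof.
  intros Hl Hm Hd H Hki.
  assert (Hp : 0 < lam / (lam + mu)) by (apply Rdiv_lt_0_compat; lra).
  assert (Hq : 0 < mu / (lam + mu)) by (apply Rdiv_lt_0_compat; lra).
  assert (Hpq : lam / (lam + mu) + mu / (lam + mu) = 1) by (field; lra).
  destruct k as [|k'].
  - rewrite Ep_0. destruct i as [|i'].
    + rewrite Ep_0. apply H; lia.
    + rewrite Ep_S by (auto; lia).
      assert (E 1%nat <= F (S (S i'))) by (apply H; lia).
      assert (E 1%nat <= sumr (S i') F / INR (S i')).
      { apply avg_ge_c; [lia|]. intros; apply H; lia. }
      pose proof (lin_comb _ _ _ _ _ _ Hp Hq H0 H1).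
      assert (E 1%nat = lam / (lam + mu) * E 1%nat + mu / (lam + mu) * E 1%nat)
        by (rewrite <- Rmult_plus_distr_r, Hpq; ring). lra.
  - rewrite Ep_S by (auto; lia). destruct i as [|i'].
    + rewrite Ep_0.
      assert (E (S (S k')) <= F 1%nat) by (apply H; lia).
      assert (sumr (S k') E / INR (S k') <= F 1%nat).
      { apply avg_le_c; [lia|]. intros; apply H; lia. }
      pose proof (lin_comb _ _ _ _ _ _ Hp Hq H0 H1).
      assert (F 1%nat = lam / (lam + mu) * F 1%nat + mu / (lam + mu) * F 1%nat)
        by (rewrite <- Rmult_plus_distr_r, Hpq; ring). lra.
    + rewrite Ep_S by (auto; lia).
      assert (E (S (S k')) <= F (S (S i'))) by (apply H; lia).
      assert (sumr (S k') E / INR (S k') <= sumr (S i') F / INR (S i')).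
      { apply (avg_couple E F (S k') (S i') d); auto; lia. }
      apply lin_comb; auto.
Qed.

Lemma compare lam mu d a b n : 0 < lam -> 0 < mu -> (1 <= d)%nat -> (b <= a + d)%nat ->
  forall E F : nat -> R, (forall j l, (j <= l + d)%nat -> E j <= F l) ->
  Ex lam mu n b E <= Ex lam mu n a F.
Proof.
  intros Hl Hm Hd Hab. induction n; intros E F H.
  - rewrite !Ex_0. apply H; auto.
  - rewrite !Ex_step. apply IHn. intros; apply (onestep lam mu d); auto.
Qed.

Definition ind (w : R) (j : nat) : R := if Rlt_dec w (INR j) then 1 else 0.

Lemma chain_tail_Ex lam mu n x w : chain_tail lam mu n x w = Ex lam mu n x (ind w).
Proof.
  unfold chain_tail, Ex. rewrite sumr_f_R0. apply sumr_ext; intros.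
  unfold ind. destruct (Rlt_dec w (INR i)); ring.
Qed.

Lemma chain_tail_bounds lam mu n x w : 0 < lam -> 0 < mu ->
  0 <= chain_tail lam mu n x w <= 1.
Proof.
  intros Hl Hm. rewrite chain_tail_Ex. split.
  - replace 0 with (Ex lam mu n x (fun _ => 0)).
    + apply Ex_mono; auto. intros; unfold ind; destruct Rlt_dec; lra.
    + unfold Ex. rewrite (sumr_ext _ _ (fun _ => 0)) by (intros; ring).
      rewrite sumr_const; ring.
  - rewrite <- (Ex_one lam mu n x) by auto. apply Ex_mono; auto.
    intros; unfold ind; destruct Rlt_dec; lra.
Qed.

Theorem corollary4p1 (lam mu alpha : R) (x y : nat) (z t : R) :
  0 < lam -> 0 < mu -> 0 < alpha -> (x < y)%nat -> 0 <= t ->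
  xi_tail lam mu alpha y t z <= xi_tail lam mu alpha x t (z - Rabs (INR x - INR y)).
Proof.
  intros Hl Hm Ha Hxy Ht.
  assert (Hd : Rabs (INR x - INR y) = INR (y - x)).
  { rewrite minus_INR by lia. rewrite Rabs_minus_sym. apply Rabs_right.
    assert (INR x <= INR y) by (apply le_INR; lia). lra. }
  rewrite Hd.
  assert (Hc : forall n, chain_tail lam mu n y z <= chain_tail lam mu n x (z - INR (y - x))).
  { intros n. rewrite !chain_tail_Ex. apply (compare lam mu (y - x)); auto; try lia.
    intros j l Hjl. unfold ind.
    destruct (Rlt_dec z (INR j)); destruct (Rlt_dec (z - INR (y - x)) (INR l)); try lra.
    exfalso. apply n0. assert (INR j <= INR (l + (y - x))) by (apply le_INR; auto).
    rewrite plus_INR in H. lra. }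
  assert (Hw : forall n, 0 <= exp (- (alpha * t)) * (alpha * t) ^ n / INR (fact n)).
  { intros n. unfold Rdiv. apply Rmult_le_pos.
    - apply Rmult_le_pos; [left; apply exp_pos|]. apply pow_le. nra.
    - left; apply Rinv_0_lt_compat, INR_fact_lt_0. }
  unfold xi_tail. apply Series_le.
  - intros n. split.
    + apply Rmult_le_pos; auto. apply chain_tail_bounds; auto.
    + apply Rmult_le_compat_l; auto.
  - apply (@ex_series_le R_AbsRing R_CompleteNormedModule _ (fun n => exp (- (alpha * t)) * (alpha * t) ^ n / INR (fact n))).
    + intros n. rewrite Rabs_pos_eq.
      * pose proof (chain_tail_bounds lam mu n x (z - INR (y - x)) Hl Hm).
        specialize (Hw n). nra.
      * apply Rmult_le_pos; auto. apply chain_tail_bounds; auto.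
    + destruct (exist_exp (alpha * t)) as [l Hl'].
      assert (ex_series (fun i => / INR (fact i) * (alpha * t) ^ i)).
      { exists l. apply is_series_Reals. exact Hl'. }
      apply (ex_series_scal_l (exp (- (alpha * t)))) in H.
      eapply ex_series_ext; [|exact H].
      intros n. unfold scal; simpl; unfold mult; simpl. unfold Rdiv; ring.
Qed.
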